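(* Let $m_1<m_2<\dots<m_k<m_{k+1}=n$ be positive integers with $m_i\mid m_{i+1}$ for all $1\le i\le k$. Let $\alpha$ be a primitive element of $\mathbb{F}_{q^n}$, $\alpha_i=\alpha^{(q^n-1)/(q^{m_i}-1)}$ (a primitive element of $\mathbb{F}_{q^{m_i}}$) and $L_{i}=m_{i}/m_{i-1}$ for $2\le i\le k+1$. For $1\le i\le k$ let $\mathcal{F}^i$ be the flag of type $(m_i,2m_i,\dots,m_{i+1}-m_i)$ with subspaces $\mathcal{F}^i_j=\bigoplus_{t=0}^{j-1}\mathbb{F}_{q^{m_i}}\alpha_{i+1}^t$, $1\le j\le L_{i+1}-1$. Then for each $1\le i\le k$, the code $\mathrm{Orb}(\mathcal{F}^i)$ is consistent, has minimum distance $2(m_{i+1}-m_i)$, and has $\mathbb{F}_{q^{m_i}}$ as its best friend.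
   Context: $q$ prime power; subspaces are $\mathbb{F}_q$-subspaces of $\mathbb{F}_{q^n}$; a flag is a chain $\{0\}\subsetneq\mathcal{F}_1\subsetneq\cdots\subsetneq\mathcal{F}_r\subsetneq\mathbb{F}_{q^n}$. $d_S(\mathcal{U},\mathcal{V})=\dim(\mathcal{U}+\mathcal{V})-\dim(\mathcal{U}\cap\mathcal{V})$, $d_f(\mathcal{F},\mathcal{F}')=\sum_i d_S(\mathcal{F}_i,\mathcal{F}'_i)$, $\mathrm{Orb}(\mathcal{F})=\{\mathcal{F}\alpha^j:j\ge0\}$ with $\mathcal{F}\alpha^j=(\mathcal{F}_1\alpha^j,\dots)$; the minimum distance of a code is the minimum distance between distinct codewords ($0$ if there is only one). The $i$-th projected code of a flag code $\mathcal{C}$ is $\mathcal{C}_i=\{\mathcal{F}_i:\mathcal{F}\in\mathcal{C}\}$; $\mathcal{C}$ is disjoint if $|\mathcal{C}_i|=|\mathcal{C}|$ for all $i$, and consistent if it is disjoint and $d_f(\mathcal{C})=\sum_i d_S(\mathcal{C}_i)$. A subfield $\mathbb{F}_{q^m}$ is a friend of a subspace if the subspace is an $\mathbb{F}_{q^m}$-vector space; a friend of a flag is a common friend of all its subspaces; the best friend is the largest friend. *)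

(* Defs.v *)
(* F_q is an abstract finite field F (q = #|F|),
   F_{q^n} is a finite-dimensional extension L : fieldExtType F (n = \dim {:L}),
   F_q-subspaces of F_{q^n} are {vspace L}. *)
From HB Require Import structures.
From mathcomp Require Import all_boot all_order all_algebra all_field.
Set Implicit Arguments.
Unset Strict Implicit.
Unset Printing Implicit Defensive.
Import GRing.Theory.
Local Open Scope ring_scope.

Section FlagDefs.
Variables (F : finFieldType) (L : fieldExtType F).

Definition dS (U V : {vspace L}) : nat := (\dim (U + V) - \dim (U :&: V))%N.

Definition flag := seq {vspace L}.

Definition dflag (G H : flag) : nat :=
  (\sum_(i < size G) dS (nth 0%VS G i) (nth 0%VS H i))%N.

Definition flag_shift (a : L) (G : flag) : flag :=
  map (fun U => (U * <[a]>)%VS) G.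

Definition qn : nat := (#|F| ^ \dim {:L})%N.

(* Orb(G) = { G alpha^j : j >= 0 }; since alpha^(q^n-1) = 1 for alpha <> 0,
   j ranges over 0 <= j < q^n - 1.  Codes are duplicate-free lists. *)
Definition Orb (alpha : L) (G : flag) : seq flag :=
  undup [seq flag_shift (alpha ^+ j) G | j <- iota 0 qn.-1].

(* i-th projected code (index i is 0-based: i = 0 is the first subspace) *)
Definition proj_code (C : seq flag) (i : nat) : seq {vspace L} :=
  undup [seq nth 0%VS G i | G <- C].

Definition disjoint_code (C : seq flag) (r : nat) : Prop :=
  forall i, (i < r)%N -> size (proj_code C i) = size C.

Definition friend_sp (K U : {vspace L}) : bool := (K * U <= U)%VS.
Definition friend_flag (K : {vspace L}) (G : flag) : bool := all (friend_sp K) G.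
Definition friend_code (K : {vspace L}) (C : seq flag) : bool :=
  all (friend_flag K) C.
Definition best_friend_code (K : {vspace L}) (C : seq flag) : Prop :=
  [/\ is_aspace K, friend_code K C &
      forall E : {subfield L}, friend_code E C -> (E <= K)%VS].

(* the subfield F_{q^m} = { x | x^(q^m) = x } *)
Definition Fqm (m : nat) : {vspace L} :=
  fixedSpace (linfun (fun x : L => x ^+ (#|F| ^ m))).

(* the flag F^i of the paper built from K = F_{q^{m_i}}, a = alpha_{i+1}
   and L_{i+1} = lpar:  F^i_j = (+)_{t<j} K a^t, 1 <= j <= lpar - 1 *)
Definition flagF (K : {vspace L}) (a : L) (lpar : nat) : flag :=
  [seq (\sum_(t < j) (K * <[a ^+ t]>))%VS | j <- iota 1 lpar.-1].

End FlagDefs.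

(* minimum distance of a list code w.r.t. d; 0 if fewer than two codewords *)
Definition min_dist (T : eqType) (d : T -> T -> nat) (C : seq T) : nat :=
  match flatten [seq [seq d x y | y <- C & y != x] | x <- C] with
  | [::] => 0%N
  | x :: s => foldr minn x s
  end.

Definition consistent_code (F : finFieldType) (L : fieldExtType F)
  (C : seq (flag L)) (r : nat) : Prop :=
  disjoint_code C r /\
  min_dist (@dflag F L) C = (\sum_(i < r) min_dist (@dS F L) (proj_code C i))%N.

(* Main.v *)
Require Import Defs.
From HB Require Import structures.
From mathcomp Require Import all_boot all_order all_algebra all_field.
From mathcomp Require Import zify.
Set Implicit Arguments.
Unset Strict Implicit.
Unset Printing Implicit Defensive.
Import GRing.Theory.
Local Open Scope ring_scope.


Lemma foldr_min_ge (v x : nat) s : (v <= x)%N -> all (leq v) s -> (v <= foldr minn x s)%N.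
Proof.
move=> hx; elim: s => //= y s IH /andP[hy hs].
by rewrite leq_min hy IH.
Qed.

Lemma foldr_min_eq (v x : nat) s : (v <= x)%N -> all (leq v) s -> v \in x :: s ->
  foldr minn x s = v.
Proof.
move=> hx; elim: s => [|y s IH] /=; first by rewrite mem_seq1 => _ /eqP ->.
move=> /andP[hy hs] hv.
have hge := foldr_min_ge hx hs.
case: (eqVneq v y) => [<-|hne]; first exact/minn_idPl.
rewrite IH //; first exact/minn_idPr.
by move: hv; rewrite !inE (negbTE hne).
Qed.

Lemma min_distE (T : eqType) (d : T -> T -> nat) (C : seq T) v :
  (forall x y, x \in C -> y \in C -> y != x -> (v <= d x y)%N) ->
  (exists x y, [/\ x \in C, y \in C, y != x & d x y = v]) -> min_dist d C = v.
Proof.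
move=> hlb [x [y [hx hy hyx hv]]]; rewrite /min_dist.
set s := flatten _.
have hin : v \in s.
  apply/flattenP; exists [seq d x y0 | y0 <- C & y0 != x]; first exact: map_f.
  by rewrite -hv map_f // mem_filter hyx.
have hall : all (leq v) s.
  apply/allP => z /flattenP[s0 /mapP[x0 hx0 ->] /mapP[y0]].
  by rewrite mem_filter => /andP[hne hy0] ->; apply: hlb.
case: s hin hall => [//|z s] hin /= /andP[hz hs].
exact: foldr_min_eq.
Qed.

Section Core.
Variables (F : finFieldType) (L : fieldExtType F).
Variables (K : {subfield L}) (a : L) (l : nat).
Hypothesis hl : (2 <= l)%N.
Hypothesis ha : a != 0.
Definition Fs j := (\sum_(t < j) (K * <[a ^+ t]>))%VS.
Hypothesis hdim : forall j, (j <= l)%N -> \dim (Fs j) = (j * \dim K)%N.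

Definition Kmod (U : {vspace L}) := (K * U <= U)%VS.

Lemma Fs_mod j : Kmod (Fs j).
Proof.
rewrite /Kmod /Fs big_distrr /=; apply/subv_sumP => t _.
rewrite prodvA prodv_id; exact: (sumv_sup t).
Qed.

Lemma mod_shift U c : Kmod U -> Kmod (U * <[c]>)%VS.
Proof. by rewrite /Kmod prodvA => h; rewrite prodvSl. Qed.

Lemma Fs1 : Fs 1 = K.
Proof. by rewrite /Fs big_ord1 expr0 prodv1. Qed.

Lemma Fs_recr j : Fs j.+1 = (Fs j + K * <[a ^+ j]>)%VS.
Proof. by rewrite /Fs big_ord_recr. Qed.

Lemma shift2 (U : {vspace L}) x y : (U * <[x]> * <[y]> = U * <[x * y]>)%VS.
Proof. by rewrite -prodvA prodv_line. Qed.

Lemma Fs_shift j : (Fs j * <[a]> = \sum_(t < j) (K * <[a ^+ t.+1]>))%VS.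
Proof.
by rewrite /Fs big_distrl; apply: eq_bigr => t _; rewrite /= shift2 exprSr.
Qed.

Lemma Fs_recl j : Fs j.+1 = (K + Fs j * <[a]>)%VS.
Proof.
rewrite Fs_shift {1}/Fs big_ord_recl expr0 prodv1; congr (_ + _)%VS.
Qed.

Lemma Fs_mono i j : (i <= j)%N -> (Fs i <= Fs j)%VS.
Proof.
elim: j => [|j IH]; first by rewrite leqn0 => /eqP ->.
rewrite leq_eqVlt => /orP[/eqP -> //|]; rewrite ltnS => /IH h.
by rewrite Fs_recr (subv_trans h) ?addvSl.
Qed.

Lemma K_sub_Fs j : (1 <= j)%N -> (K <= Fs j)%VS.
Proof. by move=> h; rewrite -{1}Fs1 Fs_mono. Qed.

Lemma Fs_sum J : (1 <= J)%N -> (Fs J + Fs J * <[a]> = Fs J.+1)%VS.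
Proof.
move=> hJ; apply: subv_anti; apply/andP; split.
  by rewrite subv_add Fs_mono // Fs_recl addvSr.
by rewrite Fs_recl subv_add (subv_trans (K_sub_Fs hJ)) ?addvSl ?addvSr.
Qed.

Lemma dim_cap J : (1 <= J)%N -> (J.+1 <= l)%N ->
  \dim (Fs J :&: Fs J * <[a]>) = (J.-1 * \dim K)%N.
Proof.
move=> h1 h2; have := dimv_sum_cap (Fs J) (Fs J * <[a]>).
rewrite Fs_sum // dim_cosetv // !hdim // ?(ltnW h2) //.
case: J h1 h2 => // J _ _ /=; rewrite !mulSn; lia.
Qed.

Lemma dS_shift J : (1 <= J)%N -> (J.+1 <= l)%N ->
  dS (Fs J) (Fs J * <[a]>) = (2 * \dim K)%N.
Proof.
move=> h1 h2; rewrite /dS Fs_sum // dim_cap // hdim //.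
case: J h1 h2 => // J _ _ /=; rewrite !mulSn; lia.
Qed.

Lemma cap_eq J : (1 <= J)%N -> (J.+2 <= l)%N ->
  (Fs J.+1 :&: Fs J.+1 * <[a]> = Fs J * <[a]>)%VS.
Proof.
move=> h1 h2; apply/eqP; rewrite eq_sym eqEdim subv_cap.
rewrite {1}Fs_recl addvSr prodvSl ?Fs_mono //=.
by rewrite dim_cap // dim_cosetv // hdim // ltnW // ltnW.
Qed.

Lemma stab j c : (1 <= j)%N -> (j < l)%N -> (Fs j * <[c]> <= Fs j)%VS -> c \in K.
Proof.
elim: j => [//|j IH] _ hjl hsub.
case: j IH hjl hsub => [|j] IH hjl hsub.
  move: hsub; rewrite Fs1 => /subvP; apply.
  by have := memv_mul (mem1v K) (memv_line c); rewrite mul1r.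
apply: IH => //; first exact: ltnW.
have h : (Fs j.+1 * <[a]> * <[c]> <= Fs j.+1 * <[a]>)%VS.
  rewrite -cap_eq //; apply: subv_trans (_ : _ <= Fs j.+2 * <[c]> :&: Fs j.+2 * <[a]> * <[c]>)%VS _.
    by rewrite subv_cap !prodvSl ?capvSl ?capvSr.
  by apply: capvS => //; rewrite !shift2 mulrC -shift2 prodvSl.
have := prodvSl <[a^-1]> h; rewrite !shift2 mulrCA divff // mulr1.
by rewrite prodv1.
Qed.

Lemma dS_refl (U : {vspace L}) : dS U U = 0%N.
Proof. by rewrite /dS addvv capvv subnn. Qed.

Lemma Kmod_cap U V : Kmod U -> Kmod V -> Kmod (U :&: V).
Proof.
rewrite /Kmod => hU hV; rewrite subv_cap; apply/andP; split.
  by apply: subv_trans hU; apply: prodvSr; apply: capvSl.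
by apply: subv_trans hV; apply: prodvSr; apply: capvSr.
Qed.

Lemma dist_lb U V : Kmod U -> Kmod V -> \dim U = \dim V -> U != V ->
  (2 * \dim K <= dS U V)%N.
Proof.
move=> hU hV hd hne.
have hc : (\dim (U :&: V) < \dim U)%N.
  rewrite ltn_neqAle dimvS ?capvSl // andbT (dimv_leqif_eq (capvSl U V)).2.
  apply: contra hne => /eqP/capv_idPl hUV.
  by rewrite eqEdim hUV hd leqnn.
have h1 := field_module_dimS hU.
have h2 := field_module_dimS (Kmod_cap hU hV).
have := dimv_sum_cap U V; rewrite /dS -hd.
move: h1 h2 hc => /dvdnP[u' ->] /dvdnP[c' ->] hc.
have hK := adim_gt0 K.
have : (c'.+1 * \dim K <= u' * \dim K)%N.
  by move: hc; rewrite ltn_mul2r leq_mul2r => /andP[_ ->]; rewrite orbT.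
rewrite mulSn; move: (\dim (U + V)) (\dim K) (c' * \dim K) (u' * \dim K) => s d x y; lia.
Qed.

Lemma Kfix U x : Kmod U -> x \in K -> x != 0 -> (U * <[x]>)%VS = U.
Proof.
move=> hU hx hx0; apply/eqP; rewrite eqEdim dim_cosetv // leqnn andbT.
apply: subv_trans (_ : _ <= U * K)%VS _; first by apply: prodvSr; rewrite -memvE.
by rewrite prodvC.
Qed.

Variables (alpha : L) (N e : nat).
Hypothesis halpha : forall j, alpha ^+ j != 0.
Hypothesis heN : (e < N)%N.
Hypothesis hae : a = alpha ^+ e.

Definition Fi := flagF K a l.
Definition C := undup [seq flag_shift (alpha ^+ j) Fi | j <- iota 0 N].

Lemma shiftE c : flag_shift c Fi = [seq (Fs j * <[c]>)%VS | j <- iota 1 l.-1].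
Proof. by rewrite /flag_shift /Fi /flagF -map_comp. Qed.

Lemma size_shift c : size (flag_shift c Fi) = l.-1.
Proof. by rewrite shiftE size_map size_iota. Qed.

Lemma nth_shift c t : (t < l.-1)%N ->
  nth 0%VS (flag_shift c Fi) t = (Fs t.+1 * <[c]>)%VS.
Proof. by move=> ht; rewrite shiftE (nth_map 0%N) ?size_iota // nth_iota. Qed.

Lemma memC G : G \in C -> exists2 j, (j < N)%N & G = flag_shift (alpha ^+ j) Fi.
Proof.
by rewrite mem_undup => /mapP[j]; rewrite mem_iota add0n => /andP[_ hj] ->; exists j.
Qed.

Lemma shift_same c1 c2 t : c1 != 0 -> c2 != 0 -> (t < l.-1)%N ->
  (Fs t.+1 * <[c1]> = Fs t.+1 * <[c2]>)%VS ->
  flag_shift c1 Fi = flag_shift c2 Fi.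
Proof.
move=> h1 h2 ht heq.
have hc : c1 / c2 \in K.
  apply: (@stab t.+1) => //; first by case: l hl ht => // l' _ /=.
  by rewrite -shift2 heq shift2 divff // prodv1.
have hc0 : c1 / c2 != 0 by rewrite mulf_neq0 ?invr_neq0.
rewrite !shiftE; apply: eq_map => j.
by rewrite -{1}(divfK h2 c1) -shift2 (@Kfix (Fs j) (c1 / c2)) //; apply: Fs_mod.
Qed.

Lemma comp_inj G H t : G \in C -> H \in C -> (t < l.-1)%N ->
  nth 0%VS G t = nth 0%VS H t -> G = H.
Proof.
move=> /memC[j1 _ ->] /memC[j2 _ ->] ht; rewrite !nth_shift //.
exact: shift_same.
Qed.

Lemma comp_prop G t : G \in C -> (t < l.-1)%N ->
  Kmod (nth 0%VS G t) /\ \dim (nth 0%VS G t) = (t.+1 * \dim K)%N.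
Proof.
move=> /memC[j _ ->] ht; rewrite nth_shift //; split.
  exact/mod_shift/Fs_mod.
rewrite dim_cosetv ?halpha // hdim //; case: (l) hl ht => // l' _ /= h; exact: ltnW.
Qed.

Lemma sizeC G : G \in C -> size G = l.-1.
Proof. by move=> /memC[j _ ->]; rewrite size_shift. Qed.

Lemma shiftC j : (j < N)%N -> flag_shift (alpha ^+ j) Fi \in C.
Proof. by move=> hj; rewrite mem_undup; apply: map_f; rewrite mem_iota. Qed.

Lemma shift1 : flag_shift 1 Fi = Fi.
Proof.
rewrite shiftE; rewrite /Fi /flagF; apply: eq_map => j; exact: prodv1.
Qed.

Lemma FiC : Fi \in C.
Proof. by rewrite -shift1 -(expr0 alpha) shiftC // (leq_ltn_trans _ heN). Qed.

Lemma FaC : flag_shift a Fi \in C.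
Proof. by rewrite hae shiftC. Qed.


Lemma ltl t : (t < l.-1)%N -> (t.+1 < l)%N.
Proof. by case: (l) hl => // l' _ /=. Qed.

Lemma nth_Fi t : (t < l.-1)%N -> nth 0%VS Fi t = Fs t.+1.
Proof. by move=> ht; rewrite -{1}shift1 nth_shift // prodv1. Qed.

Lemma nth_Fa t : (t < l.-1)%N -> nth 0%VS (flag_shift a Fi) t = (Fs t.+1 * <[a]>)%VS.
Proof. exact: nth_shift. Qed.

Lemma dS_Fa t : (t < l.-1)%N -> dS (nth 0%VS Fi t) (nth 0%VS (flag_shift a Fi) t) = (2 * \dim K)%N.
Proof. by move=> ht; rewrite nth_Fi // nth_Fa // dS_shift // ltl. Qed.

Lemma size_Fi : size Fi = l.-1.
Proof. by rewrite /Fi /flagF size_map size_iota. Qed.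

Lemma disjC : disjoint_code C (size Fi).
Proof.
move=> t; rewrite size_Fi => ht; rewrite /proj_code undup_id ?size_map //.
rewrite map_inj_in_uniq ?undup_uniq // => G H hG hH; exact: comp_inj.
Qed.

Lemma proj_mem U t : U \in proj_code C t -> exists2 G, G \in C & U = nth 0%VS G t.
Proof. by rewrite mem_undup => /mapP[G hG ->]; exists G. Qed.

Lemma proj_md t : (t < l.-1)%N -> min_dist (@dS F L) (proj_code C t) = (2 * \dim K)%N.
Proof.
move=> ht; apply: min_distE.
  move=> U V /proj_mem[G hG ->] /proj_mem[H hH ->] hne.
  have [hG1 hG2] := comp_prop hG ht; have [hH1 hH2] := comp_prop hH ht.
  by apply: dist_lb => //; [rewrite hG2 hH2 | rewrite eq_sym].
exists (nth 0%VS Fi t), (nth 0%VS (flag_shift a Fi) t); split.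
- by rewrite mem_undup; apply: (map_f (fun G : flag L => nth 0%VS G t)); exact: FiC.
- by rewrite mem_undup; apply: (map_f (fun G : flag L => nth 0%VS G t)); exact: FaC.
- apply/eqP => heq; have := dS_Fa ht; rewrite heq dS_refl => /esym/eqP.
  by rewrite muln_eq0 /= => /eqP hK; have := adim_gt0 K; rewrite hK.
- exact: dS_Fa.
Qed.

Lemma C_md : min_dist (@dflag F L) C = (l.-1 * (2 * \dim K))%N.
Proof.
apply: min_distE.
  move=> G H hG hH hne; rewrite /dflag sizeC //.
  rewrite -[in leqLHS](card_ord l.-1) -sum_nat_const; apply: leq_sum => i _.
  have [hG1 hG2] := comp_prop hG (ltn_ord i); have [hH1 hH2] := comp_prop hH (ltn_ord i).
  rewrite dist_lb ?hG2 ?hH2 //; apply/eqP => heq.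
  by have hGH := comp_inj hG hH (ltn_ord i) heq; rewrite hGH eqxx in hne.
exists Fi, (flag_shift a Fi); split; rewrite ?FiC ?FaC //.
  have h0 : (0 < l.-1)%N by case: (l) hl => [//|[]].
  apply/eqP => heq; have := dS_Fa h0; rewrite heq dS_refl => /esym/eqP.
  by rewrite muln_eq0 /= => /eqP hK; have := adim_gt0 K; rewrite hK.
rewrite /dflag size_Fi -[in RHS](card_ord l.-1) -sum_nat_const.
by apply: eq_bigr => i _; rewrite dS_Fa.
Qed.

Lemma consC : consistent_code C (size Fi).
Proof.
split; first exact: disjC.
rewrite C_md size_Fi -[in LHS](card_ord l.-1) -sum_nat_const.
by apply: eq_bigr => i _; rewrite proj_md.
Qed.

Lemma bfC : best_friend_code K C.
Proof.
split; first exact: (valP K).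
  apply/allP => G /memC[j _ ->]; apply/allP => U; rewrite shiftE => /mapP[i _ ->].
  exact/mod_shift/Fs_mod.
move=> E /allP /(_ _ FiC) /allP hE.
have h0 : (0 < l.-1)%N by case: (l) hl => [//|[]].
have := hE _ (mem_nth 0%VS (_ : 0 < size Fi)%N); rewrite size_Fi => /(_ h0).
rewrite nth_Fi // Fs1 /friend_sp => h.
apply: subv_trans h; rewrite -{1}(prodv1 E); exact: prodvSr (sub1v K).
Qed.

End Core.
Section Frob.
Variables (F : finFieldType) (L : fieldExtType F).

Lemma expf_card_pow (c : F) d : c ^+ (#|F| ^ d) = c.
Proof.
elim: d => [|d IH]; first by rewrite expr1.
by rewrite expnSr exprM IH expf_card.
Qed.

Lemma memFqm d (x : L) : (x \in Fqm L d) = (x ^+ (#|F| ^ d) == x).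
Proof.
pose f (y : L) := y ^+ (#|F| ^ d).
have fA : zmod_morphism f.
  rewrite /f => y z.
  have [p _ pcharFp] := finPcharP F; rewrite (card_pprimeChar pcharFp) -expnM.
  elim: (_ * d)%N => // n IHn; rewrite expnSr !exprM {}IHn.
  by rewrite -(pchar_lalg L) in pcharFp; rewrite -pFrobenius_autE rmorphB.
have fZ : scalable f.
  move=> c y; rewrite /f -[in LHS]mulr_algl exprMn -in_algE -rmorphXn /=.
  by rewrite expf_card_pow mulr_algl.
pose faM := GRing.isZmodMorphism.Build _ _ f fA.
pose flM := GRing.isScalable.Build _ _ _ _ f fZ.
pose fL : {linear L -> L} := HB.pack f faM flM.
have E : forall y, linfun (fun y : L => y ^+ (#|F| ^ d)) y = y ^+ (#|F| ^ d).
  move=> y; exact: (lfunE fL y).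
by rewrite /Fqm; apply/fixedSpaceP/eqP; rewrite E.
Qed.


Lemma Fqm_aspace d : is_aspace (Fqm L d).
Proof.
apply/andP; split.
  by apply: has_algid1; rewrite memFqm expr1n.
by apply/prodvP => x y; rewrite !memFqm exprMn => /eqP -> /eqP ->.
Qed.

Lemma prim_sub (z : L) N D : N.-primitive_root z -> (0 < N)%N -> (D %| N)%N ->
  D.-primitive_root (z ^+ (N %/ D)).
Proof.
move=> hz hN hD.
have hD0 : (0 < D)%N by case: D hD => //; rewrite dvd0n => /eqP h; rewrite h in hN.
have hND : (0 < N %/ D)%N by rewrite divn_gt0 // dvdn_leq.
have := exp_prim_root hz (N %/ D)%N.
have -> : gcdn (N %/ D) N = (N %/ D)%N.
  by apply/gcdn_idPl; rewrite -{2}(divnK hD) dvdn_mulr.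
by rewrite -{1}(divnK hD) mulKn.
Qed.

Lemma prim_fix (z : L) D : (0 < D)%N -> D.-primitive_root z -> z ^+ D.+1 = z.
Proof. by move=> hD hz; rewrite exprSr prim_expr_order // mul1r. Qed.

Lemma prim_le (z : L) d1 d2 : (0 < d1)%N -> (0 < d2)%N ->
  (#|F| ^ d1).-1.-primitive_root z -> z ^+ (#|F| ^ d2) = z -> (d1 <= d2)%N.
Proof.
move=> h1 h2 hz hz2.
have hq := finNzRing_gt1 F.
have hpos : forall d', (0 < d')%N -> (0 < (#|F| ^ d').-1)%N.
  move=> d' hd'; have : (#|F| ^ 1 <= #|F| ^ d')%N by rewrite leq_exp2l.
  rewrite expn1 -subn1; move: (#|F| ^ d')%N hq => x.
  move: #|F| => Q; lia.
have z0 : z != 0.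
  apply/eqP => z0; have := prim_expr_order hz; rewrite z0 expr0n.
  by rewrite eqn0Ngt hpos //= => /eqP; rewrite eq_sym oner_eq0.
have : z ^+ (#|F| ^ d2).-1 = 1.
  apply: (mulIf z0); rewrite mul1r -exprSr prednK ?expn_gt0 ?(ltnW hq) //.
move/eqP; rewrite -(prim_order_dvd hz) => /(dvdn_leq (hpos _ h2)) hle.
have : (#|F| ^ d1 <= #|F| ^ d2)%N.
  have := expn_gt0 #|F| d1; have := expn_gt0 #|F| d2; rewrite (ltnW hq) /=.
  move: hle; move: (#|F| ^ d1)%N (#|F| ^ d2)%N => x y; lia.
by rewrite leq_exp2l.
Qed.

Lemma dvd_N d : (d %| \dim {:L})%N -> ((#|F| ^ d).-1 %| (qn L).-1)%N.
Proof. by rewrite /qn => /dvdnP[k ->]; rewrite mulnC expnM; exact: dvdn_pred_predX. Qed.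

Lemma N_gt0 : (0 < (qn L).-1)%N.
Proof.
have hq := finNzRing_gt1 F; have := adim_gt0 (aspacef L).
move=> hn; have : (#|F| ^ 1 <= #|F| ^ \dim {:L})%N by rewrite leq_exp2l.
rewrite /qn expn1 -subn1 => h; move: (#|F| ^ _)%N h hq => x; move: #|F| => Q; lia.
Qed.

Lemma qd_gt0 d : (0 < d)%N -> (0 < (#|F| ^ d).-1)%N.
Proof.
move=> hd; have hq := finNzRing_gt1 F.
have : (#|F| ^ 1 <= #|F| ^ d)%N by rewrite leq_exp2l.
rewrite expn1 -subn1; move: (#|F| ^ d)%N hq => x; move: #|F| => Q; lia.
Qed.

Lemma prim_d (alpha : L) d : (d %| \dim {:L})%N -> (qn L).-1.-primitive_root alpha ->
  (#|F| ^ d).-1.-primitive_root (alpha ^+ ((qn L).-1 %/ (#|F| ^ d).-1)).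
Proof. by move=> hd ha; apply: prim_sub => //; [exact: N_gt0 | exact: dvd_N]. Qed.

Lemma prim_fixq (alpha : L) d : (0 < d)%N -> (d %| \dim {:L})%N ->
  (qn L).-1.-primitive_root alpha ->
  (alpha ^+ ((qn L).-1 %/ (#|F| ^ d).-1)) ^+ (#|F| ^ d) = alpha ^+ ((qn L).-1 %/ (#|F| ^ d).-1).
Proof.
move=> h0 hd ha; have := prim_fix (qd_gt0 h0) (prim_d hd ha).
by rewrite prednK // expn_gt0 (ltnW (finNzRing_gt1 F)).
Qed.

Lemma Fqm_sub (alpha : L) d : (0 < d)%N -> (d %| \dim {:L})%N ->
  (qn L).-1.-primitive_root alpha ->
  exists K : {subfield L}, (K : {vspace L}) = Fqm L d /\ \dim K = d.
Proof.
move=> hd hdn ha.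
pose K : {subfield L} := ASpace (Fqm_aspace d).
exists K; split => //.
have hK0 := adim_gt0 K.
have hKn : (\dim K %| \dim {:L})%N by apply: field_dimS; apply: subvf.
apply/eqP; rewrite eqn_leq; apply/andP; split.
  apply: (prim_le hK0 hd (prim_d hKn ha)); apply/eqP; rewrite -memFqm.
  rewrite (_ : Fqm L d = K) // Fermat's_little_theorem prim_fixq //.
apply: (prim_le hd hK0 (prim_d hdn ha)); apply/eqP.
by rewrite -Fermat's_little_theorem /= memFqm prim_fixq.
Qed.

Lemma adj_le (alpha : L) (K : {subfield L}) d : (0 < d)%N -> (d %| \dim {:L})%N ->
  (qn L).-1.-primitive_root alpha ->
  (d <= \dim <<K; alpha ^+ ((qn L).-1 %/ (#|F| ^ d).-1)>>%AS)%N.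
Proof.
move=> hd hdn ha; apply: (prim_le hd (adim_gt0 _) (prim_d hdn ha)).
by apply/eqP; rewrite -Fermat's_little_theorem memv_adjoin.
Qed.

Lemma partial_dim (U : nat -> {vspace L}) d D j :
  (forall i, \dim (U i) = d) -> \dim (\sum_(i < D) U i)%VS = (D * d)%N -> (j <= D)%N ->
  \dim (\sum_(i < j) U i)%VS = (j * d)%N.
Proof.
move=> hU hD hj.
have hle : forall r (P : pred nat), (\dim (\sum_(i <- r | P i) U i)%VS <= \sum_(i <- r | P i) d)%N.
  move=> r P; apply: leq_trans (dimv_leq_sum _ _ _) _.
  by apply: leq_sum => i _; rewrite hU.
have h1 := hle (index_iota 0 j) xpredT.
have h2 := hle (index_iota j D) xpredT.
rewrite -(big_mkord xpredT U) in hD; rewrite -(big_mkord xpredT U).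
have := dimv_add_leqif (\sum_(0 <= i < j) U i)%VS (\sum_(j <= i < D) U i)%VS.
move=> /leqifP; rewrite -(big_cat_nat (leq0n j) hj) /= hD => h3.
rewrite sum_nat_const_nat in h1; rewrite sum_nat_const_nat in h2.
rewrite subn0 in h1.
have h4 : (D * d <= \dim (\sum_(0 <= i < j) U i)%VS + \dim (\sum_(j <= i < D) U i)%VS)%N.
  by case: ifP h3 => _ h3; [rewrite (eqP h3) | apply: ltnW].
have h5 : ((D - j) * d + j * d = D * d)%N by rewrite -mulnDl subnK.
move: h1 h2 h4 h5; move: (\dim _) (\dim _) ((D - j) * d)%N (j * d)%N (D * d)%N.
move=> x y z w v; lia.
Qed.

End Frob.

Unset Implicit Arguments.
Set Strict Implicit.
Theorem mainTheorem9 (F : finFieldType) (L : fieldExtType F)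
  (k : nat) (m : nat -> nat) (alpha : L) :
  (0 < m 1)%N ->
  (forall i, (1 <= i <= k)%N -> (m i < m i.+1)%N /\ (m i %| m i.+1)%N) ->
  m k.+1 = \dim {:L} ->
  (qn L).-1.-primitive_root alpha ->
  forall i, (1 <= i <= k)%N ->
    let alpha_i1 := alpha ^+ ((qn L).-1 %/ (#|F| ^ m i.+1).-1) in
    let Fi := flagF (Fqm L (m i)) alpha_i1 (m i.+1 %/ m i) in
    let C := Orb alpha Fi in
    [/\ consistent_code C (size Fi),
        min_dist (@dflag F L) C = (2 * (m i.+1 - m i))%N
      & best_friend_code (Fqm L (m i)) C].
Proof.
move=> hm1 hinc hmk ha i hi ai Fi0 C0; subst ai Fi0 C0.
have hpos : forall j, (1 <= j <= k.+1)%N -> (0 < m j)%N.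
  case=> [//|[//|j]] /andP[_ hj].
  have [h _] := hinc j.+1 hj; exact: leq_ltn_trans (leq0n _) h.
have hdvd : forall j d, (1 <= j)%N -> (j + d <= k.+1)%N -> (m j %| m (j + d))%N.
  move=> j; elim=> [|d IH] h1 h2; first by rewrite addn0.
  rewrite addnS in h2 *; apply: dvdn_trans (IH h1 (ltnW h2)) _.
  by apply: (proj2 (hinc (j + d) _)); apply/andP; split; lia.
move: (hi) => /andP[hi1 hik].
have hmi : (0 < m i)%N by apply: hpos; apply/andP; split; lia.
have [hlt hdv] := hinc i hi.
have hmin : (m i %| \dim {:L})%N.
  by rewrite -hmk -(subnKC (_ : i <= k.+1)%N) ?hdvd ?subnKC //; lia.
have hmin1 : (m i.+1 %| \dim {:L})%N.
  by rewrite -hmk -(subnKC (_ : i.+1 <= k.+1)%N) ?hdvd ?subnKC //; lia.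
have hmi1 : (0 < m i.+1)%N by lia.
have [K [hKF hKd]] := Fqm_sub hmi hmin ha.
rewrite -hKF.
set a := alpha ^+ _.
set l := (m i.+1 %/ m i)%N.
have hml : m i.+1 = (l * m i)%N by rewrite divnK.
have hl : (1 < l)%N.
  rewrite ltnNge; apply/negP => hl1.
  have : (l * m i <= 1 * m i)%N by rewrite leq_mul2r hl1 orbT.
  by rewrite mul1n -hml; lia.
have hq := finNzRing_gt1 F.
have ha0 : alpha != 0.
  apply/eqP => a0; have := prim_expr_order ha; rewrite a0 expr0n.
  by rewrite eqn0Ngt N_gt0 /= => /eqP; rewrite eq_sym oner_eq0.
have hapow : forall j, alpha ^+ j != 0 by move=> j; rewrite expf_neq0.
have hane : a != 0 by rewrite expf_neq0.
have hdimF : forall j, (j <= l)%N -> \dim (Fs K a j) = (j * \dim K)%N.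
  move=> j hj.
  apply: (@partial_dim F L (fun t => (K * <[a ^+ t]>)%VS) _ (adjoin_degree K a)).
  - by move=> t; rewrite dim_cosetv // expf_neq0.
  - have := Fadjoin_sum_direct K a; rewrite directvE /= => /eqP ->.
    rewrite (eq_bigr (fun _ => \dim K)); last by move=> t _; rewrite dim_cosetv // expf_neq0.
    by rewrite sum_nat_const card_ord.
  - apply: leq_trans hj _.
    have := adj_le K hmi1 hmin1 ha; rewrite -/a dim_Fadjoin hKd hml.
    by rewrite leq_mul2r eqn0Ngt hmi.
have heN : ((qn L).-1 %/ (#|F| ^ m i.+1).-1 < (qn L).-1)%N.
  apply: ltn_Pdiv; last exact: N_gt0.
  have : (#|F| ^ 2 <= #|F| ^ m i.+1)%N by rewrite leq_exp2l //; lia.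
  rewrite -subn1; move: (#|F| ^ m i.+1)%N => x.
  have : (2 * 2 <= #|F| ^ 2)%N by rewrite -mulnn; apply: leq_mul.
  move: (#|F| ^ 2)%N => y; lia.
split.
- exact: (consC hl hane hdimF hapow heN).
- have hKd2 : (\dim K = m i)%N := hKd.
  rewrite (C_md hl hane hdimF hapow heN) // hKd2 hml.
  case: (l) hl => [//|l' _]; rewrite mulSn /=.
  move: (l' * m i)%N => x; lia.
- exact: (@bfC _ _ K a l hl alpha _ _ heN).
Qed.
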